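(* Let $\mathscr H$ be a complex Hilbert space and $\mathbf{X},\mathbf{Y}\in\mathbb{B}(\mathscr H)^d$. Then $$\max\{w_e(\mathbf{X}),w_e(\mathbf{Y})\}\le w_e\left(\begin{bmatrix}\mathbf{X}&\mathbf{Y}\\-\mathbf{Y}&-\mathbf{X}\end{bmatrix}\right)\le w_e(\mathbf{X})+w_e(\mathbf{Y}).$$
   Context: $\mathbb{B}(\mathscr H)$ denotes the bounded linear operators on $\mathscr H$. $w_e(\mathbf{T})=\sup\{(\sum_{k}|\langle T_kx,x\rangle|^2)^{1/2}: \|x\|=1\}$ for $\mathbf{T}=(T_1,\dots,T_d)$; $-\mathbf{X}=(-X_1,\dots,-X_d)$. For $d$-tuples, $\begin{bmatrix}\mathbf{X}&\mathbf{Y}\\\mathbf{Z}&\mathbf{W}\end{bmatrix}$ denotes the $d$-tuple $\left(\begin{bmatrix}X_k&Y_k\\Z_k&W_k\end{bmatrix}\right)_{k=1}^d$ of operators on $\mathscr H\oplus\mathscr H$. *)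

(* Defs.v *)
From HB Require Import structures.
From mathcomp Require Import all_boot all_order all_algebra.
From mathcomp Require Import classical_sets reals.
From mathcomp Require Import complex.
Set Implicit Arguments. Unset Strict Implicit. Unset Printing Implicit Defensive.
Import Order.TTheory GRing.Theory Num.Theory.
Local Open Scope ring_scope.

Section Hilbert.
Variable R : realType.
Local Notation C := R[i].

Definition cconj (z : C) : C := complex.Complex (complex.Re z) (- complex.Im z).

Definition cabs2 (z : C) : R := complex.Re z ^+ 2 + complex.Im z ^+ 2.

Definition is_inner_product (V : lmodType C) (ip : V -> V -> C) : Prop :=
  [/\ (forall (a : C) (x y z : V), ip (a *: x + y) z = a * ip x z + ip y z),
      (forall x y : V, ip y x = cconj (ip x y)),
      (forall x : V, complex.Im (ip x x) = 0 /\ 0 <= complex.Re (ip x x))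
    & (forall x : V, ip x x = 0 -> x = 0)].

Definition ipnorm (V : Type) (ip : V -> V -> C) (x : V) : R :=
  Num.sqrt (complex.Re (ip x x)).

Definition ip_complete (V : lmodType C) (ip : V -> V -> C) : Prop :=
  forall u : nat -> V,
    (forall e : R, 0 < e -> exists N : nat, forall m n : nat,
        (N <= m)%N -> (N <= n)%N -> ipnorm ip (u m - u n) < e) ->
    exists l : V, forall e : R, 0 < e -> exists N : nat, forall n : nat,
        (N <= n)%N -> ipnorm ip (u n - l) < e.

Definition is_hilbert (V : lmodType C) (ip : V -> V -> C) : Prop :=
  is_inner_product ip /\ ip_complete ip.

Definition bounded_op (V : lmodType C) (ip : V -> V -> C) (T : V -> V) : Prop :=
  (forall (a : C) (x y : V), T (a *: x + y) = a *: T x + T y) /\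
  (exists M : R, forall x : V, ipnorm ip (T x) <= M * ipnorm ip x).

Definition euclid_radius (V : Type) (ip : V -> V -> C) (d : nat)
    (T : 'I_d -> V -> V) : R :=
  sup [set r : R | exists x : V, ipnorm ip x = 1 /\
        r = Num.sqrt (\sum_(k < d) cabs2 (ip (T k x) x))]%classic.

Definition ip_sum (V : Type) (ip : V -> V -> C) (p q : V * V) : C :=
  ip p.1 q.1 + ip p.2 q.2.

Definition block_op (V : lmodType C) (A B D E : V -> V) (p : V * V) : V * V :=
  (A p.1 + B p.2, D p.1 + E p.2).

Definition block_tuple (V : lmodType C) (d : nat) (X Y Z W : 'I_d -> V -> V)
    : 'I_d -> V * V -> V * V :=
  fun k => block_op (X k) (Y k) (Z k) (W k).

Definition neg_tuple (V : lmodType C) (d : nat) (X : 'I_d -> V -> V)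
    : 'I_d -> V -> V :=
  fun k x => - X k x.

End Hilbert.

(* Main.v *)
Require Import Defs.
From HB Require Import structures.
From mathcomp Require Import all_boot all_order all_algebra.
From mathcomp Require Import boolp classical_sets reals.
From mathcomp Require Import complex.
From mathcomp Require Import ring lra.
Import Order.TTheory GRing.Theory Num.Theory.
Set Implicit Arguments. Unset Strict Implicit.
Local Open Scope ring_scope.
Local Open Scope classical_set_scope.


Lemma cconjD (R : realType) (a b : R[i]) : cconj (a + b) = cconj a + cconj b.
Proof. case: a => a1 a2; case: b => b1 b2; rewrite /cconj /=; congr complex.Complex; ring. Qed.
Lemma cconjM (R : realType) (a b : R[i]) : cconj (a * b) = cconj a * cconj b.
Proof. case: a => a1 a2; case: b => b1 b2; rewrite /cconj /=; congr complex.Complex; ring. Qed.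
Lemma cconjK (R : realType) (a : R[i]) : cconj (cconj a) = a.
Proof. case: a => a1 a2; rewrite /cconj /=; congr complex.Complex; ring. Qed.
Lemma cabs2M (R : realType) (a b : R[i]) : cabs2 (a * b) = cabs2 a * cabs2 b.
Proof. case: a => a1 a2; case: b => b1 b2; rewrite /cabs2 /=; ring. Qed.
Lemma cabs2_ge0 (R : realType) (a : R[i]) : 0 <= cabs2 a.
Proof. rewrite /cabs2; apply: addr_ge0; exact: sqr_ge0. Qed.

Lemma self_add0 (M : zmodType) (a : M) : a = a + a -> a = 0.
Proof. by move/(congr1 (fun t => t - a)); rewrite addrK subrr. Qed.

Lemma ip0l (R : realType) (V : lmodType R[i]) (ip : V -> V -> R[i]) :
  is_inner_product ip -> forall z, ip 0 z = 0.
Proof.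
case=> lin _ _ _ z.
have := lin 1 0 0 z; rewrite scale1r addr0 mul1r; exact: self_add0.
Qed.
Lemma ipDl (R : realType) (V : lmodType R[i]) (ip : V -> V -> R[i]) :
  is_inner_product ip -> forall x y z, ip (x + y) z = ip x z + ip y z.
Proof. case=> lin _ _ _ x y z; by rewrite -[x]scale1r lin scale1r mul1r. Qed.
Lemma ipZl (R : realType) (V : lmodType R[i]) (ip : V -> V -> R[i]) :
  is_inner_product ip -> forall a x z, ip (a *: x) z = a * ip x z.
Proof.
move=> h a x z; have := ip0l h z; case: h => lin _ _ _ h0.
by rewrite -[a *: x]addr0 lin h0 addr0.
Qed.
Lemma ipNl (R : realType) (V : lmodType R[i]) (ip : V -> V -> R[i]) :
  is_inner_product ip -> forall x z, ip (- x) z = - ip x z.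
Proof. move=> h x z; by rewrite -scaleN1r (ipZl h) mulN1r. Qed.
Lemma ipC (R : realType) (V : lmodType R[i]) (ip : V -> V -> R[i]) :
  is_inner_product ip -> forall x y, ip y x = cconj (ip x y).
Proof. by case. Qed.
Lemma ipDr (R : realType) (V : lmodType R[i]) (ip : V -> V -> R[i]) :
  is_inner_product ip -> forall x y z, ip z (x + y) = ip z x + ip z y.
Proof. move=> h x y z; by rewrite (ipC h) (ipDl h) cconjD -!(ipC h). Qed.
Lemma ipZr (R : realType) (V : lmodType R[i]) (ip : V -> V -> R[i]) :
  is_inner_product ip -> forall a x z, ip z (a *: x) = cconj a * ip z x.
Proof. move=> h a x z; by rewrite (ipC h) (ipZl h) cconjM -!(ipC h). Qed.
Lemma ipNr (R : realType) (V : lmodType R[i]) (ip : V -> V -> R[i]) :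
  is_inner_product ip -> forall x z, ip z (- x) = - ip z x.
Proof. move=> h x z; rewrite (ipC h) (ipNl h) (ipC h z x); case: (ip z x) => a b; rewrite /cconj /=; congr complex.Complex; ring. Qed.
Lemma ip0r (R : realType) (V : lmodType R[i]) (ip : V -> V -> R[i]) :
  is_inner_product ip -> forall z, ip z 0 = 0.
Proof. move=> h z; rewrite (ipC h) (ip0l h) /cconj /=; apply/eqP; rewrite eq_complex /= oppr0; by rewrite !eqxx. Qed.
Lemma ipIm (R : realType) (V : lmodType R[i]) (ip : V -> V -> R[i]) :
  is_inner_product ip -> forall x, complex.Im (ip x x) = 0.
Proof. by case=> _ _ h _ x; case: (h x). Qed.
Lemma ipRe (R : realType) (V : lmodType R[i]) (ip : V -> V -> R[i]) :
  is_inner_product ip -> forall x, 0 <= complex.Re (ip x x).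
Proof. by case=> _ _ h _ x; case: (h x). Qed.

Lemma opD (R : realType) (V : lmodType R[i]) (ip : V -> V -> R[i]) T :
  bounded_op ip T -> forall x y, T (x + y) = T x + T y.
Proof. rewrite /bounded_op; by case=> lin _ x y; rewrite -[x]scale1r lin !scale1r. Qed.
Lemma op0 (R : realType) (V : lmodType R[i]) (ip : V -> V -> R[i]) T :
  bounded_op ip T -> T 0 = 0.
Proof.
move=> h; have := opD h 0 0; rewrite addr0; exact: self_add0.
Qed.
Lemma opZ (R : realType) (V : lmodType R[i]) (ip : V -> V -> R[i]) T :
  bounded_op ip T -> forall a x, T (a *: x) = a *: T x.
Proof. move=> h a x; have h0 := op0 h; move: h; rewrite /bounded_op; case=> lin _; by rewrite -[a *: x]addr0 lin h0 addr0. Qed.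
Lemma opN (R : realType) (V : lmodType R[i]) (ip : V -> V -> R[i]) T :
  bounded_op ip T -> forall x, T (- x) = - T x.
Proof. move=> h x; by rewrite -scaleN1r (opZ h) scaleN1r. Qed.


Definition Nrm (R : realType) (d : nat) (f : 'I_d -> R[i]) : R :=
  Num.sqrt (\sum_(k < d) cabs2 (f k)).

Lemma Nrm_ge0 (R : realType) d (f : 'I_d -> R[i]) : 0 <= Nrm f.
Proof. exact: sqrtr_ge0. Qed.

Lemma Nrm_ext (R : realType) d (f g : 'I_d -> R[i]) :
  (forall k, f k = g k) -> Nrm f = Nrm g.
Proof. by move=> h; rewrite /Nrm; congr Num.sqrt; apply: eq_bigr => k _; rewrite h. Qed.

Lemma Nrm_scale (R : realType) d (c : R[i]) (f : 'I_d -> R[i]) :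
  Nrm (fun k => c * f k) = Num.sqrt (cabs2 c) * Nrm f.
Proof.
rewrite /Nrm -sqrtrM ?cabs2_ge0 // mulr_sumr; congr Num.sqrt.
by apply: eq_bigr => k _; rewrite cabs2M.
Qed.

Lemma sqrt_le (R : realType) (S t : R) : 0 <= t -> S <= t ^+ 2 -> Num.sqrt S <= t.
Proof.
move=> t0 h; rewrite -[t in _ <= t](ger0_norm t0) -sqrtr_sqr; exact: ler_wsqrtr.
Qed.

Lemma CS (R : realType) d (f g : 'I_d -> R[i]) :
  (\sum_(k < d) (complex.Re (f k) * complex.Re (g k) + complex.Im (f k) * complex.Im (g k))) ^+ 2
  <= (\sum_(k < d) cabs2 (f k)) * (\sum_(k < d) cabs2 (g k)).
Proof.
set D := \sum_(k < d) _; set A := \sum_(k < d) cabs2 (f k); set B := \sum_(k < d) cabs2 (g k).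
have key : B * (A * B - D ^+ 2) = \sum_(k < d)
   ((B * complex.Re (f k) - D * complex.Re (g k)) ^+ 2 + (B * complex.Im (f k) - D * complex.Im (g k)) ^+ 2).
  rewrite (eq_bigr (fun k => B ^+ 2 * cabs2 (f k) - 2 * B * D *
     (complex.Re (f k) * complex.Re (g k) + complex.Im (f k) * complex.Im (g k)) + D ^+ 2 * cabs2 (g k))); last first.
    by move=> k _; rewrite /cabs2; ring.
  rewrite big_split /= big_split /= sumrN -!mulr_sumr -/A -/B -/D; ring.
have ge : 0 <= B * (A * B - D ^+ 2).
  rewrite key; apply: sumr_ge0 => k _; apply: addr_ge0; exact: sqr_ge0.
have B0 : 0 <= B by apply: sumr_ge0 => k _; exact: cabs2_ge0.
case: (ltrP 0 B) => hB.
  by have := ge; rewrite pmulr_rge0 // subr_ge0.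
have B00 : B = 0 by apply/eqP; rewrite eq_le hB B0.
have hg : forall k, cabs2 (g k) = 0.
  by move=> k; move: B00; rewrite /B => /psumr_eq0P; apply => // j _; exact: cabs2_ge0.
have -> : D = 0.
  rewrite /D; apply: big1 => k _; have := hg k; rewrite /cabs2 => h.
  have h1 : complex.Re (g k) = 0 by apply/eqP; rewrite -sqrf_eq0; apply/eqP; have := sqr_ge0 (complex.Im (g k)); have := sqr_ge0 (complex.Re (g k)); lra.
  have h2 : complex.Im (g k) = 0 by apply/eqP; rewrite -sqrf_eq0; apply/eqP; have := sqr_ge0 (complex.Im (g k)); have := sqr_ge0 (complex.Re (g k)); lra.
  by rewrite h1 h2; ring.
rewrite B00; lra.
Qed.

Lemma Nrm_tri (R : realType) d (f g : 'I_d -> R[i]) :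
  Nrm (fun k => f k + g k) <= Nrm f + Nrm g.
Proof.
apply: sqrt_le; first by apply: addr_ge0; exact: Nrm_ge0.
set D := \sum_(k < d) (complex.Re (f k) * complex.Re (g k) + complex.Im (f k) * complex.Im (g k)).
set A := \sum_(k < d) cabs2 (f k); set B := \sum_(k < d) cabs2 (g k).
have -> : \sum_(k < d) cabs2 (f k + g k) = A + B + 2 * D.
  rewrite (eq_bigr (fun k => cabs2 (f k) + cabs2 (g k) + 2 * (complex.Re (f k) * complex.Re (g k) + complex.Im (f k) * complex.Im (g k)))); last first.
    by move=> k _; case: (f k) => a b; case: (g k) => c e; rewrite /cabs2 /=; ring.
  by rewrite big_split /= big_split /= -mulr_sumr.
have A0 : 0 <= A by apply: sumr_ge0 => k _; exact: cabs2_ge0.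
have B0 : 0 <= B by apply: sumr_ge0 => k _; exact: cabs2_ge0.
have hD : D <= Nrm f * Nrm g.
  rewrite /Nrm -sqrtrM // -/A -/B.
  apply: le_trans (real_ler_norm _) _; first by apply: num_real.
  rewrite -sqrtr_sqr; apply: ler_wsqrtr; exact: CS.
have e1 : Nrm f ^+ 2 = A by rewrite /Nrm sqr_sqrtr.
have e2 : Nrm g ^+ 2 = B by rewrite /Nrm sqr_sqrtr.
rewrite sqrrD e1 e2; lra.
Qed.


Definition Eset (R : realType) (V : Type) (ip : V -> V -> R[i]) (d : nat)
    (T : 'I_d -> V -> V) : set R :=
  [set r : R | exists x : V, ipnorm ip x = 1 /\
        r = Num.sqrt (\sum_(k < d) cabs2 (ip (T k x) x))].

Definition qv (R : realType) (V : Type) (ip : V -> V -> R[i]) (d : nat)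
    (T : 'I_d -> V -> V) (x : V) : 'I_d -> R[i] := fun k => ip (T k x) x.

Lemma w_ge0 (R : realType) (V : Type) (ip : V -> V -> R[i]) d (T : 'I_d -> V -> V) :
  0 <= euclid_radius ip T.
Proof.
rewrite /euclid_radius; set S := [set _ | _].
case: (pselect (has_sup S)) => h; last by rewrite sup_out.
case: (h) => [[r Sr] _]; have := sup_upper_bound h Sr.
case: Sr => x [_ ->]; apply: le_trans; exact: sqrtr_ge0.
Qed.

Lemma w_ub (R : realType) (V : Type) (ip : V -> V -> R[i]) d (T : 'I_d -> V -> V) :
  has_ubound (Eset ip T) -> forall x, ipnorm ip x = 1 -> Nrm (qv ip T x) <= euclid_radius ip T.
Proof. move=> hb x hx; apply: (ub_le_sup hb); by exists x. Qed.

Lemma w_le (R : realType) (V : Type) (ip : V -> V -> R[i]) d (T : 'I_d -> V -> V) (b : R) :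
  0 <= b -> (forall x, ipnorm ip x = 1 -> Nrm (qv ip T x) <= b) -> euclid_radius ip T <= b.
Proof.
move=> b0 hb; rewrite /euclid_radius; set S := [set _ | _].
case: (pselect (has_sup S)) => h; last by rewrite sup_out.
apply: ge_sup; first by case: h.
by move=> r [x [hx ->]]; exact: hb.
Qed.

Lemma phase (R : realType) (V : lmodType R[i]) (ip : V -> V -> R[i]) :
  is_inner_product ip -> forall c z x, cabs2 c = 1 ->
  2 * complex.Re (cconj c * ip z x) <= complex.Re (ip z z) + complex.Re (ip x x).
Proof.
move=> h c z x hc.
have := ipRe h (z + (- c) *: x).
rewrite !(ipDl h) !(ipDr h) !(ipZl h) !(ipZr h) (ipC h z x).
have := ipIm h z; have := ipIm h x.
move: hc; rewrite /cabs2.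
case: (ip z z) => zz1 zz2; case: (ip x x) => xx1 xx2; case: (ip z x) => w1 w2; case: c => c1 c2.
rewrite /cconj /= => hc hx hz.
subst => H.
have E : (- c1 * (- c1 * xx1 - - - c2 * 0) - - c2 * (- c1 * 0 + - - c2 * xx1)) = (c1 ^+ 2 + c2 ^+ 2) * xx1 by ring.
rewrite E hc mul1r in H; lra.
Qed.

Lemma ipbound (R : realType) (V : lmodType R[i]) (ip : V -> V -> R[i]) :
  is_inner_product ip -> forall z x,
  cabs2 (ip z x) <= 2 * ((complex.Re (ip z z) + complex.Re (ip x x)) / 2) ^+ 2.
Proof.
move=> h z x.
have h1 := phase h (c := 1) z x.
have h2 := phase h (c := -1) z x.
have h3 := phase h (c := 'i) z x.
have h4 := phase h (c := - 'i) z x.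
move: h1 h2 h3 h4; rewrite /cabs2.
case: (ip z x) => w1 w2; rewrite /cconj /=.
move=> h1 h2 h3 h4.
have {h1}h1 := h1 ltac:(ring). have {h2}h2 := h2 ltac:(ring).
have {h3}h3 := h3 ltac:(ring). have {h4}h4 := h4 ltac:(ring).
move: h1 h2 h3 h4; set P := complex.Re (ip z z) + complex.Re (ip x x).
move=> h1 h2 h3 h4.
have e1 : w1 ^+ 2 <= (P / 2) ^+ 2 by nra.
have e2 : w2 ^+ 2 <= (P / 2) ^+ 2 by nra.
lra.
Qed.


Lemma Eset_bounded (R : realType) (V : lmodType R[i]) (ip : V -> V -> R[i]) d
  (T : 'I_d -> V -> V) :
  is_inner_product ip -> (forall k, bounded_op ip (T k)) -> has_ubound (Eset ip T).
Proof.
move=> h hT.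
have : forall k, exists M : R, forall x, ipnorm ip (T k x) <= M * ipnorm ip x.
  by move=> k; case: (hT k).
case/choice => Mf hM.
exists (Num.sqrt (\sum_(k < d) 2 * ((Mf k ^+ 2 + 1) / 2) ^+ 2)).
move=> r [x [hx ->]].
apply: ler_wsqrtr; apply: ler_sum => k _.
apply: le_trans (ipbound h _ _) _.
have Q1 : complex.Re (ip x x) = 1.
  have := sqr_sqrtr (ipRe h x); rewrite -/(ipnorm ip x) hx => <-; ring.
have a := hM k x; rewrite hx mulr1 in a.
have e := sqr_sqrtr (ipRe h (T k x)); rewrite -/(ipnorm ip (T k x)) in e.
have n0 : 0 <= ipnorm ip (T k x) by exact: sqrtr_ge0.
have p0 := ipRe h (T k x).
rewrite Q1; move: e a n0 p0.
set P := complex.Re _; set n := ipnorm _ _; set M := Mf k.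
move=> e a n0 p0.
have hP : P <= M ^+ 2 by rewrite -e; nra.
nra.
Qed.

Lemma Kbound (R : realType) (V : lmodType R[i]) (ip : V -> V -> R[i]) d
  (T : 'I_d -> V -> V) :
  is_inner_product ip -> (forall k, bounded_op ip (T k)) ->
  forall z, Nrm (qv ip T z) <= complex.Re (ip z z) * euclid_radius ip T.
Proof.
move=> h hT z.
have r0 := ipRe h z.
case: (ltrP 0 (complex.Re (ip z z))) => hr; last first.
  have r00 : complex.Re (ip z z) = 0 by apply/eqP; rewrite eq_le hr r0.
  have ez : ip z z = 0.
    move: (ipIm h z) r00; case: (ip z z) => a b /= -> ->.
    by apply/eqP; rewrite eq_complex /= !eqxx.
  have z0 : z = 0 by case: h => _ _ _ hd; exact: hd.
  rewrite r00 mul0r /Nrm big1 ?sqrtr0 // => k _.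
  rewrite /qv z0 (op0 (hT k)) (ip0l h) /cabs2 /=; ring.
set r := complex.Re (ip z z) in hr r0 *.
set s := Num.sqrt r.
have s0 : 0 < s by rewrite sqrtr_gt0.
have ss : s ^+ 2 = r by rewrite sqr_sqrtr.
set a := s^-1.
have aa : a * a = r^-1 by rewrite /a -ss; field; rewrite gt_eqF.
set x := (a%:C)%C *: z.
have hx : forall w : R[i], (a%:C)%C * cconj ((a%:C)%C) * w = ((a * a)%:C)%C * w.
  move=> w; case: w => w1 w2; rewrite /cconj /=; congr complex.Complex; ring.
have Rx : complex.Re (ip x x) = 1.
  have ReC : forall (t : R) (w : R[i]), complex.Re ((t%:C)%C * w) = t * complex.Re w.
    by move=> t [w1 w2] /=; ring.
  rewrite /x (ipZl h) (ipZr h) mulrA hx ReC -/r aa mulVf //; exact: lt0r_neq0.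
have ux : ipnorm ip x = 1 by rewrite /ipnorm Rx sqrtr1.
have := w_ub (Eset_bounded h hT) ux.
rewrite (@Nrm_ext _ _ _ (fun k => ((a * a)%:C)%C * qv ip T z k)); last first.
  by move=> k; rewrite /qv /x (opZ (hT k)) (ipZl h) (ipZr h) mulrA hx.
rewrite Nrm_scale.
have -> : cabs2 (((a * a)%:C)%C) = (a * a) ^+ 2 by rewrite /cabs2 /=; ring.
rewrite sqrtr_sqr ger0_norm ?aa; last by rewrite invr_ge0 ltW.
move=> H.
have -> : Nrm (qv ip T z) = r * (r^-1 * Nrm (qv ip T z)).
  by rewrite mulrA mulfV ?mul1r // lt0r_neq0.
by apply: ler_wpM2l; [exact: ltW|].
Qed.


Lemma ReD (R : realType) (a b : R[i]) : complex.Re (a + b) = complex.Re a + complex.Re b.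
Proof. by case: a => ? ?; case: b => ? ?. Qed.

Lemma upper_pt (R : realType) (V : lmodType R[i]) (ip : V -> V -> R[i])
    (d : nat) (X Y : 'I_d -> V -> V) :
  is_inner_product ip ->
  (forall k, bounded_op ip (X k)) ->
  (forall k, bounded_op ip (Y k)) ->
  forall p, ipnorm (ip_sum ip) p = 1 ->
  Nrm (qv (ip_sum ip) (block_tuple X Y (neg_tuple Y) (neg_tuple X)) p)
    <= euclid_radius ip X + euclid_radius ip Y.
Proof.
move=> h hX hY [u v] hp.
have hs : complex.Re (ip u u) + complex.Re (ip v v) = 1.
  have := sqr_sqrtr (addr_ge0 (ipRe h u) (ipRe h v)).
  by rewrite -ReD -/(ipnorm (ip_sum ip) (u, v)) hp expr1n.
set c : R[i] := complex.Complex 0 (1 / 2).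
set z1 := v + 'i%C *: u; set z2 := v + (- 'i%C) *: u.
rewrite (@Nrm_ext _ _ _ (fun k => (qv ip X u k + (-1) * qv ip X v k) +
     c * (qv ip Y z1 k + (-1) * qv ip Y z2 k))); last first.
  move=> k; rewrite /qv /ip_sum /block_tuple /block_op /neg_tuple /= /z1 /z2.
  rewrite !(opD (hY k)) !(opZ (hY k)).
  rewrite !(ipDl h) !(ipDr h) !(ipNl h) !(ipZl h) !(ipZr h).
  move: (ip (X k u) u) (ip (X k v) v) (ip (Y k v) u) (ip (Y k u) v) (ip (Y k u) u) (ip (Y k v) v).
  move=> [a1 a2] [b1 b2] [c1 c2] [e1 e2] [f1 f2] [g1 g2].
  rewrite /c /cconj; apply/eqP; rewrite eq_complex /=; apply/andP; split; apply/eqP; lra.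
apply: le_trans (Nrm_tri _ _) _.
rewrite Nrm_scale.
have -> : Num.sqrt (cabs2 c) = 1 / 2.
  have -> : cabs2 c = (1 / 2) ^+ 2 by rewrite /cabs2 /=; nra.
  by rewrite sqrtr_sqr ger0_norm // divr_ge0.
have hA := Nrm_tri (qv ip X u) (fun k => (-1) * qv ip X v k).
have hB := Nrm_tri (qv ip Y z1) (fun k => (-1) * qv ip Y z2 k).
rewrite Nrm_scale in hA; rewrite Nrm_scale in hB.
have n1 : Num.sqrt (cabs2 (-1 : R[i])) = 1.
  have -> : cabs2 (-1 : R[i]) = 1 by rewrite /cabs2 /=; nra.
  exact: sqrtr1.
rewrite n1 !mul1r in hA hB.
have KXu := Kbound h hX u; have KXv := Kbound h hX v.
have KY1 := Kbound h hY z1; have KY2 := Kbound h hY z2.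
have hz : complex.Re (ip z1 z1) + complex.Re (ip z2 z2) = 2 * (complex.Re (ip u u) + complex.Re (ip v v)).
  rewrite -!ReD /z1 /z2 !(ipDl h) !(ipDr h) !(ipZl h) !(ipZr h).
  move: (ip u u) (ip v v) (ip u v) (ip v u) => [a1 a2] [b1 b2] [c1 c2] [e1 e2].
  rewrite /cconj /=; ring.
rewrite hs in hz.
set wX := euclid_radius ip X in KXu KXv *; set wY := euclid_radius ip Y in KY1 KY2 *.
have wX0 : 0 <= wX by exact: w_ge0.
have wY0 : 0 <= wY by exact: w_ge0.
have eX : complex.Re (ip u u) * wX + complex.Re (ip v v) * wX = wX by rewrite -mulrDl hs mul1r.
have eY : complex.Re (ip z1 z1) * wY + complex.Re (ip z2 z2) * wY = 2 * wY by rewrite -mulrDl hz mulr1.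
lra.
Qed.

Local Close Scope classical_set_scope.
Unset Implicit Arguments.

Theorem theorem3p10 (R : realType) (V : lmodType R[i]) (ip : V -> V -> R[i])
    (d : nat) (X Y : 'I_d -> V -> V) :
  is_hilbert ip ->
  (forall k, bounded_op ip (X k)) ->
  (forall k, bounded_op ip (Y k)) ->
  let M := block_tuple X Y (neg_tuple Y) (neg_tuple X) in
  Num.max (euclid_radius ip X) (euclid_radius ip Y) <= euclid_radius (ip_sum ip) M /\
  euclid_radius (ip_sum ip) M <= euclid_radius ip X + euclid_radius ip Y.
Proof.
move=> [hip _] hX hY M.
have up := upper_pt hip hX hY.
have bM : classical_sets.has_ubound (Eset (ip_sum ip) M).
  exists (euclid_radius ip X + euclid_radius ip Y) => r [p [hp ->]]; exact: up p hp.
have wM0 : 0 <= euclid_radius (ip_sum ip) M by exact: w_ge0.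
split; last first.
  apply: w_le; first by apply: addr_ge0; exact: w_ge0.
  exact: up.
rewrite ge_max; apply/andP; split.
  apply: w_le => // x hx.
  have hp : ipnorm (ip_sum ip) (x, 0) = 1 by rewrite /ipnorm /ip_sum /= (ip0l hip) addr0.
  apply: le_trans (w_ub bM hp); rewrite le_eqVlt; apply/orP; left; apply/eqP.
  apply: Nrm_ext => k.
  by rewrite /qv /ip_sum /M /block_tuple /block_op /neg_tuple /= (op0 (hY k)) (op0 (hX k)) oppr0 !addr0 (ip0r hip) addr0.
apply: w_le => // x hx.
have Q1 : complex.Re (ip x x) = 1.
  have := sqr_sqrtr (ipRe hip x); rewrite -/(ipnorm ip x) hx => <-; ring.
set s := Num.sqrt (1 / 2 : R).
have ss : s ^+ 2 = 1 / 2 by rewrite sqr_sqrtr // divr_ge0.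
set p := ((s%:C)%C *: x, ('i%C * (s%:C)%C) *: x).
have hp : ipnorm (ip_sum ip) p = 1.
  rewrite /ipnorm /ip_sum /p /= !(ipZl hip) !(ipZr hip).
  have : complex.Im (ip x x) = 0 by exact: ipIm hip x.
  move: Q1; case: (ip x x) => w1 w2 /= -> ->.
  transitivity (Num.sqrt (1 : R)); last exact: sqrtr1.
  congr Num.sqrt; nra.
have e : forall k, qv (ip_sum ip) M p k = (complex.Complex 0 (2 * s ^+ 2)) * qv ip Y x k.
  move=> k; rewrite /qv /ip_sum /M /block_tuple /block_op /neg_tuple /p /=.
  rewrite !(opZ (hX k)) !(opZ (hY k)) !(ipDl hip) !(ipNl hip) !(ipZl hip) !(ipZr hip).
  move: (ip (X k x) x) (ip (Y k x) x) => [a1 a2] [b1 b2].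
  rewrite /cconj; apply/eqP; rewrite eq_complex /=; apply/andP; split; apply/eqP; ring.
apply: le_trans (w_ub bM hp); rewrite le_eqVlt; apply/orP; left; apply/eqP.
rewrite (Nrm_ext e) Nrm_scale.
have -> : cabs2 (complex.Complex 0 (2 * s ^+ 2)) = 1 by rewrite /cabs2 /= ss; nra.
by rewrite sqrtr1 mul1r.
Qed.
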